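(* Let $\mathcal{C}>2$. For a probability vector $\boldsymbol\pi\in\mathbb{R}^k$, let $\tilde G^m(\boldsymbol\pi)=\sum_{i=1}^k\sqrt{\pi_i(\mathcal{C}-\pi_i)}$. Then $\tilde G^m$ is strongly concave with respect to the $\ell_2$-norm with modulus $\frac{2(\mathcal{C}-2)^2}{\mathcal{C}^3}$. Consequently, for any probability vectors $\boldsymbol\pi_0,\boldsymbol\pi_1\in\mathbb{R}^k$, any $\beta\in[0,1]$, and $\boldsymbol\pi=(1-\beta)\boldsymbol\pi_0+\beta\boldsymbol\pi_1$, \[ \tilde G^m(\boldsymbol\pi)-(1-\beta)\tilde G^m(\boldsymbol\pi_0)-\beta\tilde G^m(\boldsymbol\pi_1)\ \ge\ \frac{(\mathcal{C}-2)^2}{\mathcal{C}^3}\beta(1-\beta)\|\boldsymbol\pi_0-\boldsymbol\pi_1\|_2^2. \]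
   Context: A function $\Phi$ is strongly concave with respect to a norm $\|\cdot\|$ with modulus $\sigma>0$ if, for all $u,v$ in its domain and all $\theta\in[0,1]$, \[ \Phi(\theta u+(1-\theta)v)\ge\theta\Phi(u)+(1-\theta)\Phi(v)+\tfrac{\sigma}{2}\theta(1-\theta)\|u-v\|^2. \] *)

(* Defs.v *)
From HB Require Import structures.
From mathcomp Require Import all_boot all_order all_algebra.
From mathcomp Require Import reals.
Set Implicit Arguments. Unset Strict Implicit. Unset Printing Implicit Defensive.
Import Order.TTheory GRing.Theory Num.Theory.
Local Open Scope ring_scope.

Definition prob_vec (R : realType) (k : nat) (p : 'rV[R]_k) : Prop :=
  (forall i, 0 <= p ord0 i) /\ \sum_(i < k) p ord0 i = 1.

Definition l2norm (R : realType) (k : nat) (x : 'rV[R]_k) : R :=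
  Num.sqrt (\sum_(i < k) x ord0 i ^+ 2).

Definition Gm (R : realType) (C : R) (k : nat) (p : 'rV[R]_k) : R :=
  \sum_(i < k) Num.sqrt (p ord0 i * (C - p ord0 i)).

Definition strongly_concave_on (R : realType) (k : nat) (D : 'rV[R]_k -> Prop)
  (Phi : 'rV[R]_k -> R) (norm : 'rV[R]_k -> R) (sigma : R) : Prop :=
  0 < sigma /\
  forall u v theta, D u -> D v -> 0 <= theta <= 1 ->
    Phi (theta *: u + (1 - theta) *: v) >=
      theta * Phi u + (1 - theta) * Phi v
      + sigma / 2 * theta * (1 - theta) * norm (u - v) ^+ 2.

(* Main.v *)
Require Import Defs.
From HB Require Import structures.
From mathcomp Require Import all_boot all_order all_algebra.
From mathcomp Require Import reals ring lra.
Import Order.TTheory GRing.Theory Num.Theory.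
Local Open Scope ring_scope.

Lemma scal (R : realType) (C a b t : R) : 2 < C -> 0 <= a <= 1 -> 0 <= b <= 1 -> 0 <= t <= 1 ->
  t * Num.sqrt (a * (C - a)) + (1 - t) * Num.sqrt (b * (C - b))
  + (C - 2) ^+ 2 / C ^+ 3 * t * (1 - t) * (a - b) ^+ 2
  <= Num.sqrt ((t * a + (1 - t) * b) * (C - (t * a + (1 - t) * b))).
Proof.
move=> C2 /andP[a0 a1] /andP[b0 b1] /andP[t0 t1].
set m := t * a + (1 - t) * b.
have m0 : 0 <= m by rewrite /m; nra.
have m1 : m <= 1 by rewrite /m; nra.
set sa := Num.sqrt (a * (C - a)); set sb := Num.sqrt (b * (C - b)); set Y := Num.sqrt _.
have ea : sa ^+ 2 = a * (C - a) by rewrite sqr_sqrtr //; nra.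
have eb : sb ^+ 2 = b * (C - b) by rewrite sqr_sqrtr //; nra.
have eY : Y ^+ 2 = m * (C - m) by rewrite sqr_sqrtr //; nra.
have sa0 : 0 <= sa by exact: sqrtr_ge0.
have sb0 : 0 <= sb by exact: sqrtr_ge0.
have Y0 : 0 <= Y by exact: sqrtr_ge0.
have saC : 2 * sa <= C by nra.
have sbC : 2 * sb <= C by nra.
have YC : 2 * Y <= C by nra.
set yc := t * sa + (1 - t) * sb.
have yc0 : 0 <= yc by rewrite /yc addr_ge0 // mulr_ge0 // subr_ge0.
have id : Y ^+ 2 - yc ^+ 2 = t * (1 - t) * ((a - b) ^+ 2 + (sa - sb) ^+ 2).
  rewrite eY /yc /m.
  have -> : (t * sa + (1 - t) * sb) ^+ 2 = t^+2 * sa^+2 + (1-t)^+2 * sb^+2 + 2 * t * (1-t) * sa * sb by ring.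
  have -> : t * (1 - t) * ((a - b) ^+ 2 + (sa - sb) ^+ 2) = t * (1 - t) * ((a - b) ^+ 2 + sa^+2 + sb^+2 - 2 * sa * sb) by ring.
  rewrite ea eb; ring.
have T0 : 0 <= t * (1 - t) * (a - b) ^+ 2.
  by rewrite mulr_ge0 ?sqr_ge0 // mulr_ge0 // subr_ge0.
have D0 : 0 <= t * (1 - t) * ((a - b) ^+ 2 + (sa - sb) ^+ 2).
  by rewrite mulr_ge0 ?addr_ge0 ?sqr_ge0 // mulr_ge0 // subr_ge0.
have DT : t * (1 - t) * (a - b) ^+ 2 <= t * (1 - t) * ((a - b) ^+ 2 + (sa - sb) ^+ 2).
  by rewrite ler_wpM2l ?lerDl ?sqr_ge0 // mulr_ge0 // subr_ge0.
rewrite -id in D0 DT.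
have Yyc : yc <= Y.
  clear -D0 Y0 yc0; nra.
have ycC : 2 * yc <= C.
  clear -saC sbC t0 t1; rewrite /yc; nra.
have key : t * (1 - t) * (a - b) ^+ 2 <= C * (Y - yc).
  clear -DT Yyc YC ycC; nra.
set T := t * (1 - t) * (a - b) ^+ 2 in T0 key *.
have C0 : 0 < C by lra.
have cC : (C - 2) ^+ 2 / C ^+ 3 * C <= 1.
  have -> : (C - 2) ^+ 2 / C ^+ 3 * C = (C - 2) ^+ 2 / C ^+ 2.
    by field; rewrite gt_eqF.
  rewrite ler_pdivrMr ?exprn_gt0 // mul1r; nra.
have : (C - 2) ^+ 2 / C ^+ 3 * T <= Y - yc.
  rewrite -(ler_pM2l C0).
  apply: le_trans key; rewrite mulrA [C * _]mulrC.
  by apply: ler_piMl.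
rewrite /T; lra.
Qed.

Lemma coord_le1 (R : realType) k (p : 'rV[R]_k) i : prob_vec p -> 0 <= p ord0 i <= 1.
Proof.
move=> [p0 p1]; rewrite p0 /= -p1 (bigD1 i) //= lerDl.
by apply: sumr_ge0 => j _.
Qed.

Lemma vec (R : realType) (C : R) k (u v : 'rV[R]_k) t : 2 < C ->
  prob_vec u -> prob_vec v -> 0 <= t <= 1 ->
  t * Gm C u + (1 - t) * Gm C v + (C - 2) ^+ 2 / C ^+ 3 * t * (1 - t) * l2norm (u - v) ^+ 2
  <= Gm C (t *: u + (1 - t) *: v).
Proof.
move=> C2 pu pv tt.
rewrite /l2norm sqr_sqrtr; last by apply: sumr_ge0 => i _; exact: sqr_ge0.
rewrite /Gm !mulr_sumr -!big_split /=.
apply: ler_sum => i _.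
rewrite !mxE.
have := (scal _ _ _ _ _ C2 (coord_le1 _ _ _ i pu) (coord_le1 _ _ _ i pv) tt). move=> H. exact: H.
Qed.

Theorem lemma12 (R : realType) (C : R) (k : nat) :
  2 < C ->
  strongly_concave_on (@prob_vec R k) (@Gm R C k) (@l2norm R k)
    (2 * (C - 2) ^+ 2 / C ^+ 3)
  /\
  (forall (p0 p1 : 'rV[R]_k) (beta : R),
     prob_vec p0 -> prob_vec p1 -> 0 <= beta <= 1 ->
     Gm C ((1 - beta) *: p0 + beta *: p1) - (1 - beta) * Gm C p0 - beta * Gm C p1
       >= (C - 2) ^+ 2 / C ^+ 3 * beta * (1 - beta) * l2norm (p0 - p1) ^+ 2).
Proof.
move=> C2; split; first split.
- have C0 : 0 < C by lra.
  by rewrite mulr_gt0 ?invr_gt0 ?exprn_gt0 // mulr_gt0 // exprn_gt0 // subr_gt0.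
- move=> u v t pu pv tt.
  have -> : 2 * (C - 2) ^+ 2 / C ^+ 3 / 2 = (C - 2) ^+ 2 / C ^+ 3.
    by field; rewrite gt_eqF //; lra.
  exact: (vec _ C _ u v t C2 pu pv tt).
- move=> p0 p1 b pp0 pp1 bb.
  have bb' : 0 <= 1 - b <= 1 by move: bb => /andP[? ?]; apply/andP; split; lra.
  have := vec _ C _ p0 p1 _ C2 pp0 pp1 bb'.
  have -> : 1 - (1 - b) = b by ring.
  move=> H; rewrite (mulrAC _ b). lra.
Qed.
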